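(* Let $G=K_{n_1,n_2,\dots,n_k}$ be a complete $k$-partite graph with $n_i\geq 1$ for all $i$. Then $\eta(G)$ equals $k$ plus the maximum size of a matching in the complete multipartite graph $K_{n_1-1,n_2-1,\dots,n_k-1}$.
   Context: All graphs are finite, simple and undirected. $K_{n_1,\dots,n_k}$ is the graph whose vertex set is partitioned into $k$ classes of sizes $n_1,\dots,n_k$ (classes may be empty), with two vertices adjacent if and only if they lie in different classes. A graph $H$ is a minor of $G$ if $H$ can be obtained from a subgraph of $G$ by contracting edges. The Hadwiger number $\eta(G)$ is the largest $t$ such that the complete graph $K_t$ is a minor of $G$. A matching is a set of pairwise disjoint edges. *)

(* Defs.v *)
From mathcomp Require Import all_boot.
Set Implicit Arguments. Unset Strict Implicit. Unset Printing Implicit Defensive.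

Definition simple_graph (T : finType) (e : rel T) : Prop :=
  irreflexive e /\ symmetric e.

Definition connected_in (T : finType) (e : rel T) (A : {set T}) : Prop :=
  forall x y, x \in A -> y \in A ->
    connect [rel u v | [&& e u v, u \in A & v \in A]] x y.

(* H = (T', e') is a minor of G = (T, e): there is a minor model, i.e. a
   family of pairwise disjoint, nonempty, connected branch sets indexed by the
   vertices of H, with an edge of G between the branch sets of adjacent
   vertices of H.  (Equivalent to: H is obtained from a subgraph of G by
   contracting edges.) *)
Definition is_minor (T' : finType) (e' : rel T') (T : finType) (e : rel T)
  : Prop :=
  exists f : T' -> {set T},
    [/\ forall a, f a != set0,
        forall a, connected_in e (f a),
        forall a b, a != b -> [disjoint f a & f b] &
        forall a b, e' a b -> exists x y, [/\ x \in f a, y \in f b & e x y]].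

Definition complete_rel (t : nat) : rel 'I_t := fun i j => i != j.

Definition has_K_minor (T : finType) (e : rel T) (t : nat) : Prop :=
  is_minor (@complete_rel t) e.

Definition hadwiger_number (T : finType) (e : rel T) (h : nat) : Prop :=
  has_K_minor e h /\ forall t, has_K_minor e t -> t <= h.

Definition is_matching (T : finType) (e : rel T) (M : {set {set T}}) : bool :=
  [forall A in M, exists x, exists y, (A == [set x; y]) && e x y] &&
  [forall A in M, forall B in M, (A != B) ==> [disjoint A & B]].

Definition matching_number (T : finType) (e : rel T) : nat :=
  \max_(M : {set {set T}} | is_matching e M) #|M|.

(* The complete multipartite graph K_{n_0,...,n_{k-1}}: vertices are pairs
   (i, j) with i < k (the class) and j < n i; two vertices are adjacent iff
   they lie in different classes. *)
Definition cmp_vert (k : nat) (n : 'I_k -> nat) : finType :=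
  {i : 'I_k & 'I_(n i)}.

Definition cmp_rel (k : nat) (n : 'I_k -> nat) : rel (cmp_vert n) :=
  fun u v => tag u != tag v.

(* Main.v *)
Require Import Defs.
From mathcomp Require Import all_boot.
Set Implicit Arguments. Unset Strict Implicit. Unset Printing Implicit Defensive.

Lemma matching_lb (T I : finType) (e : rel T) (P : I -> {set T}) (A : {set I}) :
  (forall a, a \in A -> exists x y, P a = [set x; y] /\ e x y) ->
  (forall a b, a \in A -> b \in A -> a != b -> [disjoint P a & P b]) ->
  #|A| <= matching_number e.
Proof.
move=> HP Hd.
have inj : {in A &, injective P}.
  move=> a b Ha Hb Pab; apply/eqP; apply/negPn/negP => nab.
  have := Hd a b Ha Hb nab; rewrite Pab => dj.
  have [x [y [Px _]]] := HP b Hb.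
  have xin : x \in P b by rewrite Px set21.
  by move: (disjointFr dj xin); rewrite xin.
have M : is_matching e (P @: A).
  apply/andP; split.
    apply/forall_inP => X /imsetP [a Ha ->].
    have [x [y [-> exy]]] := HP a Ha.
    by apply/existsP; exists x; apply/existsP; exists y; rewrite eqxx exy.
  apply/forall_inP => X /imsetP [a Ha ->]; apply/forall_inP => Y /imsetP [b Hb ->].
  apply/implyP => nab; apply: Hd => //; apply: contra nab => /eqP ->; by [].
rewrite -(card_in_imset inj).
exact: (@leq_bigmax_cond _ (fun M => is_matching e M) (fun M : {set {set T}} => #|M|) _ M).
Qed.

Section Psi.
Variables (k : nat) (n : 'I_k -> nat).

Definition psi (cj : forall i, 'I_(n i)) (u : cmp_vert (fun i => (n i).-1)) : cmp_vert n :=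
  Tagged (fun i => 'I_(n i)) (lift (cj (tag u)) (tagged u)).

Variable cj : forall i, 'I_(n i).

Lemma psi_tag u : tag (psi cj u) = tag u.
Proof. by []. Qed.

Lemma psi_inj : injective (psi cj).
Proof.
case=> i x [i' x'] /= E.
have ii : i = i' by have := congr1 (@projT1 _ _) E.
subst i'.
have := eq_from_Tagged E => /lift_inj /= h; by rewrite h.
Qed.

Lemma psi_nc u : psi cj u != Tagged (fun i => 'I_(n i)) (cj (tag u)).
Proof.
rewrite eq_Tagged /=; rewrite eq_sym; exact: neq_lift.
Qed.


Lemma psi_surj v : v != Tagged (fun i => 'I_(n i)) (cj (tag v)) ->
  exists u, psi cj u = v.
Proof.
case: v => i j /=; rewrite eq_Tagged /=.
case: (unliftP (cj i) j) => [j' -> _|->]; last by rewrite eqxx.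
by exists (Tagged (fun i => 'I_((n i).-1)) j').
Qed.

End Psi.

Lemma img2 (aT rT : finType) (g : aT -> rT) x y : g @: [set x; y] = [set g x; g y].
Proof. by rewrite imsetU1 imset_set1. Qed.

Lemma disj_img (aT rT : finType) (g : aT -> rT) (A B : {set aT}) :
  injective g -> [disjoint A & B] -> [disjoint g @: A & g @: B].
Proof.
move=> ig; rewrite -!setI_eq0 => /eqP AB; rewrite -imsetI ?AB ?imset0 //.
by move=> x y _ _; apply: ig.
Qed.

Lemma cross_edge (k : nat) (n : 'I_k -> nat) (X Y : {set cmp_vert n}) x0 x1 y1 :
  x0 \in X -> x1 \in Y -> y1 \in Y -> tag x1 != tag y1 ->
  exists x y, [/\ x \in X, y \in Y & cmp_rel x y].
Proof.
move=> h0 h1 h2 d; case E: (tag x0 == tag x1).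
  by exists x0, y1; split => //; rewrite /cmp_rel (eqP E).
by exists x0, x1; split => //; rewrite /cmp_rel E.
Qed.

Lemma lower (k : nat) (n : 'I_k -> nat) (hn : forall i, 0 < n i) :
  has_K_minor (@cmp_rel k n) (k + matching_number (@cmp_rel k (fun i => (n i).-1))).
Proof.
set e' := @cmp_rel k (fun i => (n i).-1).
have [M HM Mmax] : exists2 M, is_matching e' M & matching_number e' = #|M|.
  have H0 : 0 < #|(fun M : {set {set cmp_vert (fun i => (n i).-1)}} => is_matching e' M)|.
    apply/card_gt0P; exists set0; rewrite /in_mem /= /is_matching; apply/andP; split;
      by apply/forall_inP => ?; rewrite inE.
  have [M0 HM0 E0] := @eq_bigmax_cond _ _ (fun M : {set {set cmp_vert (fun i => (n i).-1)}} => #|M|) H0.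
  by exists M0 => //; rewrite /matching_number -E0.
have Mpair : forall X, X \in M -> exists x y, X = [set x; y] /\ e' x y.
  move: HM => /andP [/forall_inP H _] X /H /existsP [x /existsP [y /andP [/eqP -> ex]]].
  by exists x, y.
have Mdisj : forall X Y, X \in M -> Y \in M -> X != Y -> [disjoint X & Y].
  move: HM => /andP [_ /forall_inP H] X Y /H /forall_inP H2 /H2; exact: implyP.
rewrite Mmax.
pose cj i : 'I_(n i) := Ordinal (hn i).
pose r i := Tagged (fun i => 'I_(n i)) (cj i).
pose f (a : 'I_(k + #|M|)) : {set cmp_vert n} :=
  match split a with inl i => [set r i] | inr j => psi cj @: (enum_val j) end.
have fpair : forall j : 'I_#|M|, exists x y, psi cj @: enum_val j = [set psi cj x; psi cj y]
     /\ tag x != tag y.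
  move=> j; have [x [y [E exy]]] := Mpair _ (enum_valP j).
  by exists x, y; rewrite E img2.
have spl : forall a b : 'I_(k + #|M|), split a = split b -> a = b.
  by move=> a b E; rewrite -(splitK a) E splitK.
exists f; split.
- move=> a; rewrite /f; case: (split a) => [i|j]; apply/set0Pn.
    by exists (r i); rewrite inE.
  have [x [y [-> _]]] := fpair j; by exists (psi cj x); rewrite !inE eqxx.
- move=> a; rewrite /f; case: (split a) => [i|j].
    by move=> x y; rewrite !inE => /eqP -> /eqP ->; exact: connect0.
  have [x [y [-> d]]] := fpair j.
  move=> u w; rewrite !inE => /orP [] /eqP -> /orP [] /eqP ->; try exact: connect0;
    apply: connect1; rewrite /= !inE !eqxx ?orbT /= andbT /cmp_rel /= //; by rewrite eq_sym.
- move=> a b nab; rewrite /f.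
  case Ea: (split a) => [i|j]; case Eb: (split b) => [i'|j'].
  + rewrite disjoints1 inE; apply/eqP => /(congr1 tag) /= ii.
    by move: nab; rewrite (spl a b) ?eqxx // Ea Eb ii.
  + rewrite disjoints1; apply/imsetP => [[u _ E]].
    have ti : tag u = i by have := congr1 tag E.
    by move: (psi_nc cj u); rewrite -E ti eqxx.
  + rewrite disjoint_sym disjoints1; apply/imsetP => [[u _ E]].
    have ti : tag u = i' by have := congr1 tag E.
    by move: (psi_nc cj u); rewrite -E ti eqxx.
  + apply: disj_img; first exact: psi_inj.
    apply: Mdisj; try exact: enum_valP.
    apply: contra nab => /eqP /enum_val_inj jj.
    by rewrite (spl a b) // Ea Eb jj.
- move=> a b; rewrite /complete_rel => nab; rewrite /f.
  case Ea: (split a) => [i|j]; case Eb: (split b) => [i'|j'].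
  + exists (r i), (r i'); rewrite !inE !eqxx; split => //=.
    rewrite /cmp_rel /=; apply: contra nab => /eqP ii.
    by rewrite (spl a b) // Ea Eb ii.
  + have [x [y [E d]]] := fpair j'.
    apply: (@cross_edge _ _ _ _ (r i) (psi cj x) (psi cj y)); rewrite ?E ?inE ?eqxx ?orbT //.
  + have [x [y [E d]]] := fpair j.
    have [u [v [hu hv euv]]] := @cross_edge _ _ [set r i'] (psi cj @: enum_val j) (r i') (psi cj x) (psi cj y)
      (set11 _) ltac:(by rewrite E !inE eqxx) ltac:(by rewrite E !inE eqxx orbT) d.
    by exists v, u; split => //; rewrite /cmp_rel eq_sym.
  + have [x [y [E d]]] := fpair j; have [x' [y' [E' d']]] := fpair j'.
    apply: (@cross_edge _ _ _ _ (psi cj x) (psi cj x') (psi cj y'));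
      rewrite ?E ?E' ?inE ?eqxx ?orbT //.
Qed.

Lemma upper (k : nat) (n : 'I_k -> nat) (hn : forall i, 0 < n i) t :
  has_K_minor (@cmp_rel k n) t ->
  t <= k + matching_number (@cmp_rel k (fun i => (n i).-1)).
Proof.
move=> [f [fne fcon fdis fedge]].
pose cj i : 'I_(n i) := odflt (Ordinal (hn i))
  [pick j : 'I_(n i) | [exists a, f a == [set Tagged (fun i => 'I_(n i)) j]]].
pose c i := Tagged (fun i => 'I_(n i)) (cj i).
pose D := [set a | [exists i, c i \in f a]].
have disjF : forall a b x, x \in f a -> x \in f b -> a = b.
  move=> a b x ha hb; apply/eqP; apply/negPn/negP => nab.
  by rewrite (disjointFr (fdis a b nab) ha) in hb.
have cardD : #|D| <= k.
  case: (set_0Vmem D) => [->|[a0]]; first by rewrite cards0.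
  rewrite inE => /existsP [i0 _].
  pose h a := odflt i0 [pick i | c i \in f a].
  have hP : forall a, a \in D -> c (h a) \in f a.
    move=> a; rewrite inE /h => /existsP [i hi]; case: pickP => [i' ->//|/(_ i)].
    by rewrite hi.
  have : {in D &, injective h}.
    move=> a b ha hb E; apply: (disjF _ _ (c (h a))); first exact: hP.
    rewrite E; exact: hP.
  move/card_in_imset <-; apply: leq_trans (max_card _) _; by rewrite card_ord.
have edge : forall a, a \notin D -> exists x y, [/\ x \in f a, y \in f a & cmp_rel x y].
  move=> a aD; have [x xa] := set0Pn _ (fne a).
  case: (boolP [exists y, (y \in f a) && (y != x)]) => [/existsP [y /andP [ya yx]] | noy].
    have := fcon a x y xa ya; case/connectP => p.
    case: p => [_ /= yx'|z p /= /andP [/and3P [exz xa' za] _] _].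
      by rewrite yx' eqxx in yx.
    by exists x, z.
  have fa1 : f a = [set x].
    apply/setP => y; rewrite inE; apply/idP/eqP => [ya|->//]; apply/eqP.
    apply/negPn/negP => yx.
    by move/negP: noy; apply; apply/existsP; exists y; rewrite ya yx.
  exfalso; move/negP: aD; apply; rewrite inE; apply/existsP; exists (tag x).
  clear noy; case: x xa fa1 => i j xa fa1 /=.
  rewrite /c /cj; case: pickP => [j' /existsP [b /eqP fb]|]; last first.
    move/(_ j) => /=.
    have -> : [exists a0, f a0 == [set Tagged (fun i => 'I_(n i)) j]].
      by apply/existsP; exists a; rewrite fa1.
    by [].
  case: (eqVneq a b) => [ab|nab]; first by rewrite /= ab fb set11.
  have [u [v [hu hv]]] := fedge a b nab; rewrite fa1 fb !inE in hu hv.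
  by rewrite (eqP hu) (eqP hv) /cmp_rel eqxx.
pose pr a := [pick p : cmp_vert n * cmp_vert n |
   [&& p.1 \in f a, p.2 \in f a & cmp_rel p.1 p.2]].
pose P a := if pr a is Some p then psi cj @^-1: [set p.1; p.2] else set0.
have PsubF : forall a, P a \subset psi cj @^-1: f a.
  move=> a; rewrite /P /pr; case: pickP => [p /and3P [h1 h2 _]|_]; last by rewrite sub0set.
  by apply/subsetP => x; rewrite !inE => /orP [] /eqP ->.
have : #|~: D| <= matching_number (@cmp_rel k (fun i => (n i).-1)).
  apply: (@matching_lb _ _ _ P).
  - move=> a; rewrite inE => aD; rewrite /P /pr.
    case: pickP => [p /and3P [h1 h2 h3]|]; last first.
      have [x [y [hx hy hxy]]] := edge a aD; move/(_ (x, y)).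
      by rewrite /= hx hy hxy.
    have nc : forall x, x \in f a -> x != c (tag x).
      move=> x hx; apply: contra aD => /eqP E; rewrite inE; apply/existsP.
      by exists (tag x); rewrite -E.
    have [u hu] := psi_surj (nc _ h1); have [w hw] := psi_surj (nc _ h2).
    exists u, w; split.
      by apply/setP => z; rewrite !inE -hu -hw !(inj_eq (@psi_inj _ _ cj)).
    by move: h3; rewrite -hu -hw.
  - move=> a b _ _ nab; apply: disjointWl (PsubF a) _.
    rewrite disjoint_sym; apply: disjointWl (PsubF b) _.
    rewrite -setI_eq0 -preimsetI; apply/eqP.

    have := fdis b a ltac:(by rewrite eq_sym).
    by rewrite -setI_eq0 => /eqP ->; exact: preimset0.
move=> H; have := cardsC D; rewrite card_ord => <-; exact: leq_add cardD H.
Qed.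

Theorem lemma4 (k : nat) (n : 'I_k -> nat) (hn : forall i, 0 < n i) :
  hadwiger_number (@cmp_rel k n)
    (k + matching_number (@cmp_rel k (fun i => (n i).-1))).
Proof. split; [exact: lower | move=> t; exact: upper]. Qed.
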